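(* Let $V_1$ and $V_2$ be near vector spaces over the same commutative $F$, each of finite block type. Then $BT(V_1)=BT(V_2)$ if and only if $\bar F\cap\mathrm{Aut}(V_1)=\bar F\cap\mathrm{Aut}(V_2)$.
   Context: An F-group is a pair $(V,F)$ where $(V,+)$ is a group and $F$ is a set of endomorphisms of $V$ such that: the maps $0,1,-1$ lie in $F$; $F\setminus\{0\}$ is a subgroup of $\mathrm{Aut}(V,+)$ under composition; and if $\alpha x=\beta x$ with $\alpha,\beta\in F$, $x\in V$ then $\alpha=\beta$ or $x=0$. The quasi-kernel $Q(V)$ is the set of $u\in V$ such that for all $\alpha,\beta\in F$ there is $\gamma\in F$ with $\alpha u+\beta u=\gamma u$. $(V,F)$ is a near vector space if $Q(V)$ generates $(V,+)$; ''over a commutative $F$'' means $\alpha(\beta v)=\beta(\alpha v)$ for all $\alpha,\beta\in F$, $v\in V$. For $u\in Q(V)\setminus\{0\}$, $\alpha+_u\beta$ is the unique $\gamma$ with $\alpha u+\beta u=\gamma u$. Elements $u,v\in Q(V)$ are compatible if $u+\lambda v\in Q(V)$ for some $\lambda\in F\setminus\{0\}$. By André's decomposition theorem $V$ is the direct sum of maximal regular (all nonzero quasi-kernel elements pairwise compatible) near vector subspaces $B_i$, $i\in I$, each nonzero element of $Q(V)$ lying in exactly one $B_i$; these are the blocks. For commutative $F$, all nonzero $u\in Q(V)\cap B_i$ give the same operation $+_{u_i}$ and $B_i$ is a vector space over the field $(F,+_{u_i},\circ)$. The block type is $BT(V)=\{+_{u_i}: i\in I\}$, a set of binary operations on $F$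 (equality means equality of sets of operations). $V$ has finite block type if $BT(V)$ is finite, equivalently $V$ has finitely many blocks. $\bar F$ is the set of formal finite sums $\alpha_1+_\cdot\cdots+_\cdot\alpha_n$ of elements of $F$, acting on $V$ by $(\alpha_1+_\cdot\cdots+_\cdot\alpha_n)(v)=\alpha_1(v)+\cdots+\alpha_n(v)$; $\bar F\cap\mathrm{Aut}(V)$ is the set of those formal sums acting on $V$ as automorphisms of $(V,+)$. *)

(* Defs.v *)
From HB Require Import structures.
From mathcomp Require Import all_boot all_order all_algebra.
From Stdlib Require Lists.List.
Set Implicit Arguments. Unset Strict Implicit. Unset Printing Implicit Defensive.
Import GRing.Theory.
Local Open Scope ring_scope.

(* The scalar "F" is an abstract type with a multiplication (composition),
   distinguished elements zero, one, minus one, acting on V via [act].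
   [is_Fgroup mul z o m act] says that [act] identifies F with a set of
   endomorphisms of (V,+) forming an F-group in the sense of the paper. *)
Definition is_Fgroup (F : Type) (mul : F -> F -> F) (z o m : F)
    (V : zmodType) (act : F -> V -> V) : Prop :=
  (forall a x y, act a (x + y) = act a x + act a y) /\
  (forall a b, (forall x, act a x = act b x) -> a = b) /\
  (forall x, act z x = 0) /\ (forall x, act o x = x) /\ (forall x, act m x = - x) /\
  (forall a b x, act (mul a b) x = act a (act b x)) /\
  z <> o /\
  (forall a b, a <> z -> b <> z -> mul a b <> z) /\
  (forall a, a <> z -> exists b, b <> z /\ mul a b = o /\ mul b a = o) /\
  (forall a b x, act a x = act b x -> a = b \/ x = 0).

Definition Fcomm (F : Type) (V : zmodType) (act : F -> V -> V) : Prop :=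
  forall a b v, act a (act b v) = act b (act a v).

Definition quasi_kernel (F : Type) (V : zmodType) (act : F -> V -> V) (u : V) : Prop :=
  forall a b, exists c, act a u + act b u = act c u.

(* near vector space: Q(V) generates (V,+) (V abelian, so the generated
   subgroup consists of finite sums of elements of Q(V) and their negatives) *)
Definition near_vector_space (F : Type) (mul : F -> F -> F) (z o m : F)
    (V : zmodType) (act : F -> V -> V) : Prop :=
  is_Fgroup mul z o m act /\
  forall v : V, exists s : seq V,
    (forall x, x \in s -> quasi_kernel act x \/ quasi_kernel act (- x)) /\
    v = \sum_(x <- s) x.

(* block type: the set of operations +_u for nonzero u in Q(V), where
   a +_u b is the (unique) c with a u + b u = c u *)
Definition block_type (F : Type) (V : zmodType) (act : F -> V -> V)
    (op : F -> F -> F) : Prop :=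
  exists u : V, [/\ quasi_kernel act u, u <> 0 &
    forall a b, act a u + act b u = act (op a b) u].

Definition finite_block_type (F : Type) (V : zmodType) (act : F -> V -> V) : Prop :=
  exists s : list (F -> F -> F), forall op, block_type act op ->
    exists op', Stdlib.Lists.List.In op' s /\ forall a b, op a b = op' a b.

(* action of a formal sum a_1 +. ... +. a_n (a list of elements of F) *)
Definition fsum_act (F : Type) (V : zmodType) (act : F -> V -> V)
    (s : seq F) (v : V) : V := \sum_(a <- s) act a v.

Definition is_aut (V : zmodType) (f : V -> V) : Prop :=
  (forall x y, f (x + y) = f x + f y) /\ bijective f.

Definition Fbar_aut (F : Type) (V : zmodType) (act : F -> V -> V) (s : seq F) : Prop :=
  is_aut (fsum_act act s).

(* Main.v *)
Require Import Defs.
From mathcomp Require Import all_boot all_order all_algebra.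
From Stdlib Require Import Classical ClassicalEpsilon.
From Stdlib Require Lists.List.
Set Implicit Arguments. Unset Strict Implicit. Unset Printing Implicit Defensive.
Import GRing.Theory.
Local Open Scope ring_scope.

Record mulfacts (F : Type) (mul : F -> F -> F) (z o : F) : Prop := MulFacts {
  mulC : forall a b, mul a b = mul b a;
  mul1 : forall a, mul o a = a;
  mul0 : forall a, mul z a = z;
  mulnz : forall a b, a <> z -> b <> z -> mul a b <> z;
  mulinv : forall a, a <> z -> exists b, mul a b = o;
  zo : z <> o }.

Record isadd (F : Type) (mul : F -> F -> F) (z m : F) (op : F -> F -> F) : Prop := IsAdd {
  opC : forall a b, op a b = op b a;
  opA : forall a b c, op (op a b) c = op a (op b c);
  op0 : forall a, op z a = a;
  opN : forall a, op a (mul m a) = z;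
  opD : forall c a b, mul c (op a b) = op (mul c a) (mul c b) }.

Fixpoint lmul (F : Type) (mul : F -> F -> F) (s t : seq F) : seq F :=
  match s with [::] => [::] | a :: s' => map (mul a) t ++ lmul mul s' t end.

Lemma opx0 F mul z m op (A : @isadd F mul z m op) x : op x z = x.
Proof. by rewrite (opC A) (op0 A). Qed.

Lemma opNeq F mul z m op (A : @isadd F mul z m op) x y : op x (mul m y) = z -> x = y.
Proof.
move=> H. have <- : op (op x (mul m y)) y = x.
  by rewrite (opA A) [op (mul m y) y](opC A) (opN A) (opx0 A).
by rewrite H (op0 A).
Qed.

Lemma val_cat F mul z o m op (M : @mulfacts F mul z o) (A : @isadd F mul z m op) s t :
  foldr op z (s ++ t) = op (foldr op z s) (foldr op z t).
Proof. elim: s => [|a s IH] /=; first by rewrite (op0 A). by rewrite IH (opA A). Qed.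

Lemma val_map F mul z o m op (M : @mulfacts F mul z o) (A : @isadd F mul z m op) a t :
  foldr op z (map (mul a) t) = mul a (foldr op z t).
Proof. elim: t => [|b t IH] /=; first by rewrite (mulC M) (mul0 M). by rewrite IH (opD A). Qed.

Lemma val_lmul F mul z o m op (M : @mulfacts F mul z o) (A : @isadd F mul z m op) s t :
  foldr op z (lmul mul s t) = mul (foldr op z s) (foldr op z t).
Proof.
elim: s => [|a s IH] /=; first by rewrite (mul0 M).
rewrite (val_cat M A) (val_map M A) IH [mul (op _ _) _](mulC M) (opD A).
by rewrite [mul (foldr _ _ _) a](mulC M) [mul (foldr _ _ _) (foldr _ _ s)](mulC M).
Qed.

Lemma val_ext F z (op op' : F -> F -> F) s : (forall a b, op a b = op' a b) ->
  foldr op z s = foldr op' z s.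
Proof. move=> H; elim: s => [|a s IH] //=; by rewrite IH H. Qed.

Lemma sepE F mul z o m (M : @mulfacts F mul z o) c0 (A0 : @isadd F mul z m c0)
  (C : list (F -> F -> F)) : (forall c, List.In c C -> isadd mul z m c) ->
  (forall c, List.In c C -> exists a b, c a b <> c0 a b) ->
  exists E, foldr c0 z E <> z /\ forall c, List.In c C -> foldr c z E = z.
Proof.
elim: C => [|c C IH] HC Hd.
  exists [:: o] => /=; split => //. rewrite (opx0 A0). by move/esym; apply: (zo M).
have [E [HE1 HE2]] := IH (fun c' h => HC c' (or_intror h)) (fun c' h => Hd c' (or_intror h)).
have Ac := HC c (or_introl erefl).
have [a [b Hab]] := Hd c (or_introl erefl).
exists (lmul mul [:: a; b; mul m (c a b)] E); split.
  rewrite (val_lmul M A0); apply: (mulnz M) => //=.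
  rewrite !(opx0 A0) -(opA A0) => /(opNeq A0) /esym; exact: Hab.
move=> c' [<-|Hc'].
  rewrite (val_lmul M Ac) /= !(opx0 Ac) -(opA Ac) (opN Ac). exact: (mul0 M).
rewrite (val_lmul M (HC c' (or_intror Hc'))) HE2 //. by rewrite (mulC M) (mul0 M).
Qed.

Lemma sepS F mul z o m (M : @mulfacts F mul z o) p0 (A0 : @isadd F mul z m p0)
  (C : list (F -> F -> F)) : (forall c, List.In c C -> isadd mul z m c) ->
  (forall c, List.In c C -> exists a b, c a b <> p0 a b) ->
  exists s, foldr p0 z s = z /\ forall c, List.In c C -> foldr c z s <> z.
Proof.
elim: C => [|c0 C IH] HC Hd; first by exists [::].
have [s [Hs1 Hs2]] := IH (fun c' h => HC c' (or_intror h)) (fun c' h => Hd c' (or_intror h)).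
have A1 := HC c0 (or_introl erefl).
case: (classic (foldr c0 z s = z)) => Hz; last first.
  by exists s; split => // c [<-|h]; [exact: Hz | exact: Hs2].
have Hd' : forall c, List.In c (p0 :: C) -> exists a b, c a b <> c0 a b.
  move=> c [<-|h].
    have [a [b H]] := Hd c0 (or_introl erefl). by exists a, b => /esym.
  apply: NNPP => Hn. apply: (Hs2 c h).
  have E : forall a b, c a b = c0 a b.
    move=> a b; apply: NNPP => Hab. apply: Hn. by exists a, b.
  by rewrite (val_ext z s E).
have [E [HE1 HE2]] := sepE M A1 (C := p0 :: C)
  (fun c h => match h with or_introl e => eq_ind _ _ A0 _ e | or_intror h' => HC c (or_intror h') end) Hd'.
exists (s ++ E); split.
  by rewrite (val_cat M A0) Hs1 (HE2 p0 (or_introl erefl)) (op0 A0).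
move=> c [<-|h].
  by rewrite (val_cat M A1) Hz (op0 A1).
rewrite (val_cat M (HC c (or_intror h))) (HE2 c (or_intror h)).
by rewrite (opx0 (HC c (or_intror h))); apply: Hs2.
Qed.

Lemma invI F mul z o m (M : @mulfacts F mul z o) (C : list (F -> F -> F)) s :
  (forall c, List.In c C -> isadd mul z m c) ->
  (forall c, List.In c C -> foldr c z s <> z) ->
  exists t, forall c, List.In c C -> mul (foldr c z s) (foldr c z t) = o.
Proof.
elim: C => [|c0 C IH] HC Hs; first by exists [::].
have [t Ht] := IH (fun c' h => HC c' (or_intror h)) (fun c' h => Hs c' (or_intror h)).
have A1 := HC c0 (or_introl erefl).
case: (classic (exists c, List.In c C /\ forall a b, c a b = c0 a b)) => [[c [hc E]]|Hn].
  exists t => c' [<-|h]; last exact: Ht.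
  rewrite -(val_ext z s E) -(val_ext z t E). exact: Ht.
have Hd : forall c, List.In c C -> exists a b, c a b <> c0 a b.
  move=> c h; apply: NNPP => H1; apply: Hn; exists c; split => // a b.
  apply: NNPP => H2; apply: H1; by exists a, b.
have [E [HE1 HE2]] := sepE M A1 (fun c h => HC c (or_intror h)) Hd.
have [w Hw] := mulinv M HE1.
have [w0 Hw0] := mulinv M (Hs c0 (or_introl erefl)).
pose e := lmul mul E [:: w].
pose t2 := lmul mul t (o :: map (mul m) e) ++ lmul mul [:: w0] e.
exists t2 => c [<-|h].
  rewrite /t2 (val_cat M A1) !(val_lmul M A1) /= (val_map M A1) !(val_lmul M A1) /=.
  rewrite !(opx0 A1) Hw (opN A1) [mul (foldr _ _ _) z](mulC M) !(mul0 M) (op0 A1).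
  by rewrite (mulC M w0) (mul1 M).
have Ac := HC c (or_intror h).
rewrite /t2 (val_cat M Ac) !(val_lmul M Ac) /= (val_map M Ac) !(val_lmul M Ac) /=.
rewrite (HE2 c h) !(mul0 M) (opx0 Ac) [mul m z](mulC M) (mul0 M) (opx0 Ac).
by rewrite [mul (foldr _ _ t) o](mulC M) (mul1 M) [mul w0 z](mulC M) (mul0 M) (opx0 Ac) Ht.
Qed.

Lemma addf0 (V : zmodType) (f : V -> V) : (forall x y, f (x+y) = f x + f y) -> f 0 = 0.
Proof. move=> H. have e := H 0 0. rewrite addr0 in e. apply: (addrI (f 0)). by rewrite addr0 -e. Qed.

Lemma addfN (V : zmodType) (f : V -> V) : (forall x y, f (x+y) = f x + f y) -> forall x, f (- x) = - f x.
Proof. move=> H x. apply: (addrI (f x)). rewrite -H !subrr. exact: addf0. Qed.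

Lemma addf_sum (V : zmodType) (f : V -> V) : (forall x y, f (x+y) = f x + f y) ->
  forall (T : Type) (l : seq T) (h : T -> V), f (\sum_(x <- l) h x) = \sum_(x <- l) f (h x).
Proof.
move=> H T l h; elim: l => [|a l IH]; first by rewrite !big_nil addf0.
by rewrite !big_cons H IH.
Qed.

Lemma fg_add F mul z o m (V : zmodType) (act : F -> V -> V) :
  is_Fgroup mul z o m act -> forall a x y, act a (x + y) = act a x + act a y.
Proof. by case. Qed.
Lemma fg_faith F mul z o m (V : zmodType) (act : F -> V -> V) :
  is_Fgroup mul z o m act -> forall a b, (forall x, act a x = act b x) -> a = b.
Proof. by case=> _ []. Qed.
Lemma fg_z F mul z o m (V : zmodType) (act : F -> V -> V) :
  is_Fgroup mul z o m act -> forall x, act z x = 0.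
Proof. by case=> _ [] _ []. Qed.
Lemma fg_o F mul z o m (V : zmodType) (act : F -> V -> V) :
  is_Fgroup mul z o m act -> forall x, act o x = x.
Proof. by case=> _ [] _ [] _ []. Qed.
Lemma fg_m F mul z o m (V : zmodType) (act : F -> V -> V) :
  is_Fgroup mul z o m act -> forall x, act m x = - x.
Proof. by case=> _ [] _ [] _ [] _ []. Qed.
Lemma fg_mul F mul z o m (V : zmodType) (act : F -> V -> V) :
  is_Fgroup mul z o m act -> forall a b x, act (mul a b) x = act a (act b x).
Proof. by case=> _ [] _ [] _ [] _ [] _ []. Qed.
Lemma fg_zo F mul z o m (V : zmodType) (act : F -> V -> V) :
  is_Fgroup mul z o m act -> z <> o.
Proof. by case=> _ [] _ [] _ [] _ [] _ [] _ []. Qed.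
Lemma fg_nz F mul z o m (V : zmodType) (act : F -> V -> V) :
  is_Fgroup mul z o m act -> forall a b, a <> z -> b <> z -> mul a b <> z.
Proof. by case=> _ [] _ [] _ [] _ [] _ [] _ [] _ []. Qed.
Lemma fg_inv F mul z o m (V : zmodType) (act : F -> V -> V) :
  is_Fgroup mul z o m act -> forall a, a <> z -> exists b, b <> z /\ mul a b = o /\ mul b a = o.
Proof. by move=> [_ [_ [_ [_ [_ [_ [_ [_ [H _]]]]]]]]]. Qed.
Lemma fg_fpf F mul z o m (V : zmodType) (act : F -> V -> V) :
  is_Fgroup mul z o m act -> forall a b x, act a x = act b x -> a = b \/ x = 0.
Proof. by move=> [_ [_ [_ [_ [_ [_ [_ [_ [_ H]]]]]]]]]. Qed.

Lemma fg_mulfacts F mul z o m (V : zmodType) (act : F -> V -> V) :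
  is_Fgroup mul z o m act -> Fcomm act -> mulfacts mul z o.
Proof.
move=> G Hc; split.
- move=> a b; apply: (fg_faith G) => x; by rewrite !(fg_mul G) Hc.
- move=> a; apply: (fg_faith G) => x; by rewrite (fg_mul G) (fg_o G).
- move=> a; apply: (fg_faith G) => x; by rewrite (fg_mul G) !(fg_z G).
- exact: (fg_nz G).
- move=> a /(fg_inv G) [b [_ [h _]]]; by exists b.
- exact: (fg_zo G).
Qed.

Lemma wit_eq F mul z o m (V : zmodType) (act : F -> V -> V) u a b :
  is_Fgroup mul z o m act -> u <> 0 -> act a u = act b u -> a = b.
Proof. move=> G nu /(fg_fpf G) [] //. Qed.

Lemma bt_isadd F mul z o m (V : zmodType) (act : F -> V -> V) op :
  is_Fgroup mul z o m act -> block_type act op -> isadd mul z m op.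
Proof.
move=> G [u [_ nu Hw]]; split.
- move=> a b; apply: (wit_eq G nu); by rewrite -!Hw addrC.
- move=> a b c; apply: (wit_eq G nu); by rewrite -!Hw addrA.
- move=> a; apply: (wit_eq G nu); by rewrite -!Hw (fg_z G) add0r.
- move=> a; apply: (wit_eq G nu); by rewrite -!Hw (fg_mul G) (fg_m G) subrr (fg_z G).
- move=> c a b; apply: (wit_eq G nu); by rewrite -!Hw !(fg_mul G) -Hw (fg_add G).
Qed.

Lemma wit_fsum F mul z o m (V : zmodType) (act : F -> V -> V) op u s :
  is_Fgroup mul z o m act -> (forall a b, act a u + act b u = act (op a b) u) ->
  fsum_act act s u = act (foldr op z s) u.
Proof.
move=> G Hw; elim: s => [|a s IH]; first by rewrite /fsum_act big_nil (fg_z G).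
by rewrite /fsum_act big_cons -/(fsum_act act s u) IH /= Hw.
Qed.

Lemma fsum_add F mul z o m (V : zmodType) (act : F -> V -> V) s :
  is_Fgroup mul z o m act -> forall x y, fsum_act act s (x + y) = fsum_act act s x + fsum_act act s y.
Proof. move=> G x y; rewrite /fsum_act -big_split; apply: eq_bigr => a _; exact: (fg_add G). Qed.

Lemma char_to F mul z o m (V : zmodType) (act : F -> V -> V) s op :
  is_Fgroup mul z o m act -> Fbar_aut act s -> block_type act op -> foldr op z s <> z.
Proof.
move=> G [_ [g fg gf]] [u [_ nu Hw]] H; apply: nu.
have e : fsum_act act s u = fsum_act act s 0.
  by rewrite (wit_fsum s G Hw) H (fg_z G) (addf0 (fsum_add s G)).
by rewrite -(fg u) e fg.
Qed.

Lemma filt (X : Type) (P : X -> Prop) (s : list X) :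
  exists C, (forall c, List.In c C -> P c) /\ (forall c, List.In c s -> P c -> List.In c C).
Proof.
elim: s => [|a s [C [H1 H2]]]; first by exists nil.
case: (classic (P a)) => Pa.
  exists (a :: C); split; first by move=> c [<-|h] //; apply: H1.
  by move=> c [<-|h] Pc; [left | right; apply: H2].
exists C; split => // c [<-|h] Pc //; exact: H2.
Qed.

Lemma bt_ext F (V : zmodType) (act : F -> V -> V) op op' :
  (forall a b, op a b = op' a b) -> block_type act op -> block_type act op'.
Proof. move=> E [u [Hq nu Hw]]; exists u; split => // a b; by rewrite -E. Qed.

Lemma fbt_filt F (V : zmodType) (act : F -> V -> V) : finite_block_type act ->
  exists C, (forall c, List.In c C -> block_type act c) /\
   (forall op, block_type act op -> exists c, List.In c C /\ forall a b, op a b = c a b).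
Proof.
move=> [s Hs]; have [C [H1 H2]] := filt (block_type act) s.
exists C; split => // op Hop; have [op' [i E]] := Hs op Hop.
exists op'; split => //; apply: H2 => //; exact: bt_ext E Hop.
Qed.

Lemma gen_id (V : zmodType) (Q : V -> Prop) (g : V -> V) :
  (forall v : V, exists s : seq V, (forall x, x \in s -> Q x \/ Q (- x)) /\ v = \sum_(x <- s) x) ->
  (forall x y, g (x + y) = g x + g y) -> (forall x, Q x -> x <> 0 -> g x = x) ->
  forall v, g v = v.
Proof.
move=> Hgen Ha HQ v; have [l [Hl ->]] := Hgen v.
rewrite (addf_sum Ha); apply: eq_big_seq => x /Hl [Hq|Hq].
  have [->|nz] := eqVneq x 0; first exact: addf0.
  by apply: HQ => //; apply/eqP.
have [e|nz] := eqVneq (- x) 0.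
  by move/eqP: e; rewrite oppr_eq0 => /eqP ->; exact: addf0.
have := addfN Ha x; rewrite HQ //; last exact/eqP.
by move/oppr_inj/esym.
Qed.

Lemma char_from F mul z o m (V : zmodType) (act : F -> V -> V) s :
  near_vector_space mul z o m act -> Fcomm act -> finite_block_type act ->
  (forall op, block_type act op -> foldr op z s <> z) -> Fbar_aut act s.
Proof.
move=> [G Hgen] Hc Hf Hs.
have M := fg_mulfacts G Hc.
have [C [HC1 HC2]] := fbt_filt Hf.
have [t Ht] := invI M (fun c h => bt_isadd G (HC1 c h)) (fun c h => Hs c (HC1 c h)).
have key : forall s1 s2, (forall c, List.In c C -> mul (foldr c z s1) (foldr c z s2) = o) ->
    forall v, fsum_act act s2 (fsum_act act s1 v) = v.
  move=> s1 s2 H; apply: (gen_id (Q := quasi_kernel act)) => //.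
    by move=> x y; rewrite !(fsum_add _ G).
  move=> x Hq nx.
  pose opx := fun a b => proj1_sig (constructive_indefinite_description _ (Hq a b)).
  have Hw : forall a b, act a x + act b x = act (opx a b) x.
    move=> a b; exact: (proj2_sig (constructive_indefinite_description _ (Hq a b))).
  have [c [hc E]] := HC2 opx (ex_intro _ x (And3 Hq nx Hw)).
  rewrite (wit_fsum s1 G Hw) /fsum_act.
  rewrite (eq_bigr (fun b => act (foldr opx z s1) (act b x))); last by move=> b _; rewrite Hc.
  rewrite -(addf_sum (fg_add G _)) -/(fsum_act act s2 x) (wit_fsum s2 G Hw) -(fg_mul G).
  by rewrite !(val_ext z _ E) H // (fg_o G).
split; first exact: (fsum_add _ G).
exists (fsum_act act t); move=> v; apply: key => // c h; rewrite (mulC M); exact: Ht.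
Qed.

Lemma one_dir F mul z o m (V1 V2 : zmodType) (act1 : F -> V1 -> V1) (act2 : F -> V2 -> V2) op :
  is_Fgroup mul z o m act1 -> near_vector_space mul z o m act2 -> Fcomm act2 ->
  finite_block_type act2 -> (forall s, Fbar_aut act2 s -> Fbar_aut act1 s) ->
  block_type act1 op -> block_type act2 op.
Proof.
move=> G1 N2 Hc2 Hf2 Haut H1.
apply: NNPP => Hn.
have G2 := N2.1.
have M := fg_mulfacts G2 Hc2.
have [C [HC1 HC2]] := fbt_filt Hf2.
have Hd : forall c, List.In c C -> exists a b, c a b <> op a b.
  move=> c h; apply: NNPP => H; apply: Hn; apply: (bt_ext _ (HC1 c h)) => a b.
  apply: NNPP => H'; apply: H; by exists a, b.
have [s [Hs1 Hs2]] := sepS M (bt_isadd G1 H1) (fun c h => bt_isadd G2 (HC1 c h)) Hd.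
have : Fbar_aut act1 s.
  apply: Haut; apply: (char_from N2 Hc2 Hf2) => op' Hop'.
  have [c [hc E]] := HC2 op' Hop'; rewrite (val_ext z s E); exact: Hs2.
by move/(char_to G1)/(_ H1).
Qed.

Theorem mainTheorem10 (F : Type) (mul : F -> F -> F) (z o m : F)
    (V1 V2 : zmodType) (act1 : F -> V1 -> V1) (act2 : F -> V2 -> V2) :
  near_vector_space mul z o m act1 -> near_vector_space mul z o m act2 ->
  Fcomm act1 -> Fcomm act2 ->
  finite_block_type act1 -> finite_block_type act2 ->
  ((forall op, block_type act1 op <-> block_type act2 op) <->
   (forall s : seq F, Fbar_aut act1 s <-> Fbar_aut act2 s)).
Proof.
move=> N1 N2 Hc1 Hc2 Hf1 Hf2; split.
  move=> Hbt s; split => Ha.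
    apply: (char_from N2 Hc2 Hf2) => op /Hbt; exact: (char_to N1.1 Ha).
  apply: (char_from N1 Hc1 Hf1) => op /Hbt; exact: (char_to N2.1 Ha).
move=> Ha op; split.
  apply: (one_dir N1.1 N2 Hc2 Hf2) => s; exact: (proj2 (Ha s)).
apply: (one_dir N2.1 N1 Hc1 Hf1) => s; exact: (proj1 (Ha s)).
Qed.
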